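(* Let $N=[n]$ and let $v:2^N\to\mathbb{R}_+$ be any monotone valuation with $v(\emptyset)=0$. For any decision map $X'$ for $v$ and any $\epsilon>0$, there exists an $\epsilon$-Nash equilibrium $p$ of the pricing game defined by $v$ and $X'$ which is welfare maximizing, i.e., $v(X'(p))=\max_{S\subseteq N}v(S)$.
   Context: Pricing game: $N=[n]$ is a set of services, service $i$ controlled by seller $i$. A buyer has valuation $v:2^N\to\mathbb{R}_+$, monotone with $v(\emptyset)=0$. For $p\in\mathbb{R}^n_+$, $p(S)=\sum_{j\in S}p_j$ and $D(v;p)=\arg\max_{S\subseteq N}(v(S)-p(S))$. A decision map is $X':\mathbb{R}^n_+\to 2^N$ with $X'(p)\in D(v;p)$ for all $p$ (not necessarily maximal). Seller $i$'s utility is $u_i(p)=p_i\cdot\mathbf{1}\{i\in X'(p)\}$. An $\epsilon$-Nash equilibrium is a $p$ with $u_i(p)\ge u_i(p_i',p_{-i})-\epsilon$ for all $i$ and $p_i'\in\mathbb{R}_+$. The welfare at $p$ is $v(X'(p))$. *)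

(* Defs.v *)
From HB Require Import structures.
From mathcomp Require Import all_boot all_order all_algebra.
From mathcomp Require Import reals.
Set Implicit Arguments. Unset Strict Implicit. Unset Printing Implicit Defensive.
Import Order.TTheory GRing.Theory Num.Theory.
Local Open Scope ring_scope.

Section Pricing.
Variables (R : realType) (n : nat).

Definition price_sum (p : 'I_n -> R) (S : {set 'I_n}) : R := \sum_(j in S) p j.

Definition nonneg_price (p : 'I_n -> R) : Prop := forall i, 0 <= p i.

Definition valuation (v : {set 'I_n} -> R) : Prop :=
  [/\ v set0 = 0, (forall S : {set 'I_n}, 0 <= v S) & (forall S T : {set 'I_n}, S \subset T -> v S <= v T)].

Definition in_demand (v : {set 'I_n} -> R) (p : 'I_n -> R) (S : {set 'I_n}) : Prop :=
  forall T : {set 'I_n}, v T - price_sum p T <= v S - price_sum p S.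

Definition decision_map (v : {set 'I_n} -> R) (X : ('I_n -> R) -> {set 'I_n}) : Prop :=
  forall p, nonneg_price p -> in_demand v p (X p).

Definition utility (X : ('I_n -> R) -> {set 'I_n}) (p : 'I_n -> R) (i : 'I_n) : R :=
  p i * (if i \in X p then 1 else 0).

Definition deviate (p : 'I_n -> R) (i : 'I_n) (q : R) : 'I_n -> R :=
  fun j => if j == i then q else p j.

Definition eps_Nash (X : ('I_n -> R) -> {set 'I_n}) (eps : R) (p : 'I_n -> R) : Prop :=
  forall (i : 'I_n) (q : R), 0 <= q -> utility X (deviate p i q) i - eps <= utility X p i.

End Pricing.

(* Main.v *)
Require Import Defs.
From HB Require Import structures.
From mathcomp Require Import all_boot all_order all_algebra.
From mathcomp Require Import reals.
From mathcomp Require Import ring lra.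
Import Order.TTheory GRing.Theory Num.Theory.
Local Open Scope ring_scope.

Section Aux.
Variables (R : realType) (n : nat) (v : {set 'I_n} -> R).
Implicit Types (p : 'I_n -> R) (S T : {set 'I_n}) (i j : 'I_n).

Definition slack (p : 'I_n -> R) (T : {set 'I_n}) :=
  v setT - v T - price_sum p (~: T).
Definition feasible (p : 'I_n -> R) := forall T : {set 'I_n}, 0 <= slack p T.
Definition tight (p : 'I_n -> R) (i : 'I_n) := exists T : {set 'I_n}, i \notin T /\ slack p T = 0.

Lemma ps_mk p S : price_sum p S = \sum_j (if j \in S then p j else 0).
Proof. by rewrite /price_sum big_mkcond. Qed.

Lemma ps_split p T : price_sum p setT = price_sum p T + price_sum p (~: T).
Proof.
rewrite !ps_mk -big_split /=; apply: eq_bigr => j _.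
by rewrite in_setT in_setC; case: (j \in T); rewrite ?addr0 ?add0r.
Qed.

Lemma step p i : feasible p -> nonneg_price p ->
  exists p', [/\ feasible p', nonneg_price p', (forall j, tight p j -> tight p' j)
             & tight p' i].
Proof.
move=> fp np.
have P0 : i \notin (set0 : {set 'I_n}) by rewrite in_set0.
case: (@arg_minP _ R _ set0 (fun T => i \notin T) (slack p) P0) => T0 PT0 minT0.
set m := slack p T0.
have m0 : 0 <= m by apply: fp.
pose p' := fun j => if j == i then p j + m else p j.
have psE S : price_sum p' S = price_sum p S + (if i \in S then m else 0).
  rewrite !ps_mk.
  rewrite (bigD1 i) //= [in RHS](bigD1 i) //= /p' eqxx.
  have -> : \sum_(j < n | j != i) (if j \in S then (if j == i then p j + m else p j) else 0)
     = \sum_(j < n | j != i) (if j \in S then p j else 0).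
    by apply: eq_bigr => j /negbTE ->.
  by case: (i \in S); rewrite ?addr0 /=; ring.
have slE T : slack p' T = slack p T - (if i \in ~: T then m else 0).
  by rewrite /slack psE opprD addrA.
exists p'; split.
- move=> T; rewrite slE in_setC.
  case: (boolP (i \in T)) => /= HT; first by rewrite subr0.
  by rewrite subr_ge0; apply: minT0.
- move=> j; rewrite /p'; case: (j == i); last by [].
  by apply: addr_ge0.
- move=> j [T [jT sT]]; exists T; split => //.
  rewrite slE in_setC sT; case: (boolP (i \in T)) => /= HT; first by rewrite subr0.
  have : m <= 0 by rewrite -sT; apply: minT0.
  by move=> h; rewrite sub0r; apply/eqP; rewrite oppr_eq0 eq_le h m0.
- exists T0; split => //; rewrite slE in_setC PT0 /= subrr //.
Qed.

Lemma exists_tight : valuation v ->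
  exists p, [/\ feasible p, nonneg_price p & forall j, tight p j].
Proof.
move=> [v0 vge vmon].
have H : forall k, (k <= n)%N -> exists p, [/\ feasible p, nonneg_price p &
   forall j : 'I_n, (j < k)%N -> tight p j].
  elim=> [|k IH] Hk.
    exists (fun _ => 0); split => //.
    move=> T; rewrite /slack /price_sum big1 // subr0 subr_ge0.
    by apply: vmon; apply: subsetT.
  have [p [fp np tp]] := IH (ltnW Hk).
  have [p' [fp' np' tp' ti]] := @step p (Ordinal Hk) fp np.
  exists p'; split => // j; rewrite ltnS leq_eqVlt; case/orP => [/eqP E|jk].
    by have -> : j = Ordinal Hk by apply: val_inj.
  by apply: tp'; apply: tp.
have [p [fp np tp]] := H n (leqnn n).
by exists p; split => // j; apply: tp.
Qed.
End Aux.

Theorem mainTheorem4 (R : realType) (n : nat) (v : {set 'I_n} -> R)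
    (X : ('I_n -> R) -> {set 'I_n}) (eps : R) :
  valuation v -> decision_map v X -> 0 < eps ->
  exists p : 'I_n -> R,
    [/\ nonneg_price p, eps_Nash X eps p &
        v (X p) = \big[Num.max/0]_(S : {set 'I_n}) v S].
Proof.
move=> hv dX eps0; have [v0 vge vmon] := hv.
have [ph [fh nh th]] := @exists_tight R n v hv.
set d := eps / (n.+1)%:R.
have d0 : 0 < d by rewrite /d divr_gt0 // ltr0n.
pose p := fun j => Num.max 0 (ph j - d).
have pnn : nonneg_price p by move=> j; rewrite /p le_max lexx.
have ple j : p j <= ph j.
  by rewrite /p ge_max nh /=; have := d0; lra.
have pdiff j : ph j - p j <= d.
  have : ph j - d <= p j by rewrite /p le_max lexx orbT.
  lra.
have plt j : 0 < ph j -> p j < ph j.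
  by move=> h; rewrite /p gt_max h /=; have := d0; lra.
have pz j : ~~ (0 < ph j) -> p j = 0.
  move=> h; have e : ph j = 0 by apply/eqP; rewrite eq_le nh andbT leNgt.
  by apply/eqP; rewrite eq_le pnn andbT -e ple.
have split_ (q : 'I_n -> R) T :
    price_sum q setT = price_sum q T + price_sum q (~: T) by apply: ps_split.
have sumle S : price_sum p S <= price_sum ph S by apply: ler_sum => j _.
have sumlt (S : {set 'I_n}) j : j \in S -> 0 < ph j -> price_sum p S < price_sum ph S.
  move=> jS hj; rewrite /price_sum (bigD1 j) //= [X in _ < X](bigD1 j) //=.
  by apply: ltr_leD; [apply: plt | apply: ler_sum => k _].
have sumdiff S : price_sum ph S - price_sum p S <= eps.
  rewrite /price_sum -sumrB.
  apply: (@le_trans _ _ (\sum_(j : 'I_n) (ph j - p j))).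
    rewrite [X in _ <= X](bigID (fun j => j \in S)) /= lerDl.
    by apply: sumr_ge0 => j _; have := ple j; lra.
  apply: (@le_trans _ _ (\sum_(j : 'I_n) d)); first by apply: ler_sum => j _.
  rewrite sumr_const card_ord -mulr_natr /d mulrAC ler_pdivrMr ?ltr0n //.
  by rewrite ler_wpM2l ?(ltW eps0) // ler_nat.
have feasp S : v S - price_sum p S <= v setT - price_sum p setT.
  have := fh S; have := sumle (~: S); rewrite /slack (split_ p S); lra.
have inD j : 0 < ph j -> j \in X p.
  move=> hj; apply/negPn/negP => jD.
  have dm := dX p pnn setT.
  have := sumlt (~: X p) j; rewrite in_setC jD => /(_ isT hj).
  have := fh (X p); rewrite /slack.
  move: dm; rewrite (split_ p (X p)); lra.
have welf : v (X p) = v setT.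
  apply/eqP; rewrite eq_le vmon ?subsetT //=.
  have dm := dX p pnn setT.
  have e0 : price_sum p (~: X p) = 0.
    rewrite /price_sum big1 // => j; rewrite in_setC => jD.
    apply: pz; apply/negP => hj; by rewrite (inD j hj) in jD.
  move: dm; rewrite (split_ p (X p)) e0; lra.
have uE i : utility X p i = p i.
  rewrite /utility; case: (boolP (0 < ph i)) => h; first by rewrite inD // mulr1.
  by rewrite pz // mul0r.
exists p; split => //.
- move=> i q q0; rewrite uE /utility.
  case: (boolP (i \in X (deviate p i q))) => H; last first.
    by rewrite mulr0 sub0r; have := pnn i; have := eps0; lra.
  rewrite mulr1.
  have [T [iT sT]] := th i.
  have dn : nonneg_price (deviate p i q).
    by move=> j; rewrite /deviate; case: (j == i).
  have dm := dX _ dn T.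
  have eT : price_sum (deviate p i q) T = price_sum p T.
    apply: eq_bigr => j jT; rewrite /deviate; case: eqP => // E.
    by move: iT; rewrite -E jT.
  set D := X (deviate p i q) in dm H.
  have eD : price_sum (deviate p i q) D = price_sum p D - p i + q.
    rewrite /price_sum (bigD1 i) //= [in RHS](bigD1 i) //= /deviate eqxx.
    have -> : \sum_(j in D | j != i) (if j == i then q else p j) =
              \sum_(j in D | j != i) p j.
      by apply: eq_bigr => j /andP [_ /negbTE ->].
    ring.
  have := feasp D; have := sumdiff (~: T); move: sT; rewrite /slack.
  move: dm; rewrite eT eD (split_ p T) /deviate eqxx; lra.
- rewrite welf; apply/eqP; rewrite eq_le; apply/andP; split.
    by rewrite (bigD1 setT) //= le_max lexx.
  apply: (big_ind (fun x => x <= v setT)) => //.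
    by move=> x y hx hy; rewrite ge_max hx hy.
  by move=> S _; apply: vmon; apply: subsetT.
Qed.
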